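(* Let $\mu$ satisfy Assumption A (see context), let $t>1$, and let $\mathcal{K}$ be a compact subset of $\mathbb{C}^+\cup\mathbb{R}$. Then there exists a constant $C>0$ such that $|\omega_t(z)|\le C$ for all $z\in\mathcal{K}$.
   Context: Assumption A: $n_{\mathrm{ac}},n_{\mathrm{pp}},n^{\mathrm{out}}_{\mathrm{pp}}\ge1$ integers; $\mu$ is a compactly supported Borel probability measure on $\mathbb{R}$ whose singular part is supported on a finite set $\{x_1,\dots,x_{n_{\mathrm{pp}}}\}$, whose absolutely continuous part $\mu_{\mathrm{ac}}$ is supported on $n_{\mathrm{ac}}$ intervals $[E_j^-,E_j^+]$, with exactly $n^{\mathrm{out}}_{\mathrm{pp}}$ atoms outside $\mathrm{supp}(\mu_{\mathrm{ac}})$, no atom at the endpoints $E_j^\pm$, and density $\rho$ with $C_j^{-1}<\rho(x)/\big((x-E_j^-)^{t_j^-}(E_j^+-x)^{t_j^+}\big)<C_j$ a.e. on $[E_j^-,E_j^+]$ for some $-1<t_j^\pm<1$, $C_j\ge1$. $m_\mu(z)=\int\frac{1}{x-z}\mu(dx)$, $F_\mu=-1/m_\mu$. $\omega_t:\mathbb{C}^+\to\mathbb{C}^+$ is the analytic subordination function with $\mathrm{Im}\,\omega_t(z)\ge\mathrm{Im}\,z$, $\omega_t(i\eta)/(i\eta)\to1$, $t\omega_t(z)-z=(t-1)F_\mu(\omega_t(z))$, extended continuously to $\mathbb{C}^+\cup\mathbb{R}$ with values in $\mathbb{C}^+\cup\mathbb{R}\cup\{\infty\}$. *)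

(* Defs.v *)
From HB Require Import structures.
From mathcomp Require Import all_boot all_order all_algebra.
From mathcomp Require Import all_classical all_reals all_analysis.
From mathcomp Require Import complex.
Import Order.TTheory GRing.Theory Num.Theory.
Import numFieldTopology.Exports numFieldNormedType.Exports.

Set Implicit Arguments.
Unset Strict Implicit.
Unset Printing Implicit Defensive.

Local Open Scope ring_scope.
Local Open Scope classical_set_scope.
Local Open Scope complex_scope.

Definition Cplx (R : realType) := (R[i])^o.

Definition closed_uhp (R : realType) : set (Cplx R) :=
  [set z | 0 <= complex.Im z].

Definition stieltjes (R : realType) (mu : probability R R) (z : Cplx R)
  : Cplx R :=
  (Rintegral mu setT (fun x : R => complex.Re ((x%:C - z)^-1)))
  +i* (Rintegral mu setT (fun x : R => complex.Im ((x%:C - z)^-1))).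

Definition F_mu (R : realType) (mu : probability R R) (z : Cplx R) : Cplx R :=
  - (stieltjes mu z)^-1.

Definition assumptionA (R : realType) (mu : probability R R)
  (nac npp nppout : nat) : Prop :=
  [/\ (1 <= nac)%N, (1 <= npp)%N, (1 <= nppout)%N &
  exists (x p : 'I_npp -> R) (Em Ep tm tp Cj : 'I_nac -> R) (rho : R -> R),
  [/\
    (* atoms x_1..x_npp, pairwise distinct, with positive masses;
       n_ac disjoint compact intervals [E_j^-, E_j^+], ordered *)
    [/\ injective x, (forall i, 0 < p i), (forall j, Em j < Ep j) &
      (forall j k : 'I_nac, (j < k)%N -> Ep j < Em k)],
    (* density rho of the a.c. part, vanishing outside the intervals *)
    [/\ measurable_fun setT rho, (forall y, 0 <= rho y) &
        (forall y, (forall j, ~ (Em j <= y <= Ep j)) -> rho y = 0)],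
    (forall A : set R, measurable A ->
       mu A = ((\int[lebesgue_measure]_(y in A) (rho y)%:E)
               + (\sum_(i < npp | x i \in A) p i)%:E)%E),
    (* no atom at the endpoints; exactly nppout atoms outside supp(mu_ac) *)
    (forall i j, x i <> Em j /\ x i <> Ep j) /\
      #|[set i : 'I_npp | [forall j, ~~ (Em j <= x i <= Ep j)]]| = nppout &
    (forall j, [/\ -1 < tm j < 1, -1 < tp j < 1, 1 <= Cj j &
       {ae lebesgue_measure, forall y : R, Em j <= y <= Ep j ->
          (Cj j)^-1 < rho y / ((y - Em j) `^ (tm j) * (Ep j - y) `^ (tp j))
          < Cj j}])]].

(* Continuity at z0, relative to D, of a map f : C -> C \cup {oo}
   (None encodes the point oo of the Riemann sphere). *)
Definition sphere_cont_at (R : realType) (D : set (Cplx R))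
  (f : Cplx R -> option (Cplx R)) (z0 : Cplx R) : Prop :=
  match f z0 with
  | Some w => forall e : R, 0 < e -> exists2 d : R, 0 < d &
      forall z, D z -> `|z - z0| < d%:C ->
        exists2 w', f z = Some w' & `|w' - w| < e%:C
  | None => forall M : R, exists2 d : R, 0 < d &
      forall z, D z -> `|z - z0| < d%:C ->
        forall w', f z = Some w' -> M%:C < `|w'|
  end.

Definition is_subordination (R : realType) (mu : probability R R) (t : R)
  (omega : Cplx R -> Cplx R) : Prop :=
  [/\
      (forall z : Cplx R, 0 < complex.Im z -> derivable omega z 1),
      (forall z : Cplx R, 0 < complex.Im z ->
          complex.Im z <= complex.Im (omega z)),
      ((fun eta : R => omega (0 +i* eta) / (0 +i* eta)) @ +oo --> (1 : Cplx R)) &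
      (forall z : Cplx R, 0 < complex.Im z ->
          t%:C * omega z - z = (t - 1)%:C * F_mu mu (omega z))].

Definition is_continuous_extension (R : realType)
  (omega : Cplx R -> Cplx R) (omega_ext : Cplx R -> option (Cplx R)) : Prop :=
  [/\ (forall z : Cplx R, 0 < complex.Im z -> omega_ext z = Some (omega z)),
      (forall z w : Cplx R, closed_uhp z -> omega_ext z = Some w ->
          0 <= complex.Im w) &
      (forall z : Cplx R, closed_uhp z ->
          sphere_cont_at (@closed_uhp R) omega_ext z)].

(* Main.v *)
Require Import Defs.
From HB Require Import structures.
From mathcomp Require Import all_boot all_order all_algebra.
From mathcomp Require Import all_classical all_reals all_analysis.
From mathcomp Require Import complex.
From mathcomp Require Import ring lra.
From mathcomp Require Import measurable_realfun.
Import Order.TTheory GRing.Theory Num.Theory.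
Import numFieldTopology.Exports numFieldNormedType.Exports.
Local Open Scope ring_scope.
Local Open Scope classical_set_scope.
Local Open Scope complex_scope.
Local Open Scope complex_scope.

Lemma sum_ge_term {R : realType} {n : nat} (F : 'I_n -> R) i :
  (forall j, 0 <= F j) -> F i <= \sum_j F j.
Proof.
move=> F0; rewrite (bigD1 i) //= lerDl; apply: sumr_ge0 => j _; exact: F0.
Qed.

Lemma supp_bound (R : realType) (mu : probability R R) nac npp nppout :
  assumptionA mu nac npp nppout ->
  exists2 B : R, 0 < B & mu [set x | B < `|x|] = 0%E.
Proof.
case=> _ _ _ [x [p [Em [Ep [tm [tp [Cj [rho [_ [_ _ rho0] dec _ _]]]]]]]]].
set S1 := \sum_i `|x i|. set S2 := \sum_j (`|Em j| + `|Ep j|).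
have S10 : 0 <= S1 by apply: sumr_ge0.
have S20 : 0 <= S2 by apply: sumr_ge0 => j _; rewrite addr_ge0.
exists (1 + S1 + S2); first lra.
have xB i : `|x i| < 1 + S1 + S2.
  have := sum_ge_term (fun i => `|x i|) i (fun j => normr_ge0 _); rewrite -/S1.
  lra.
have EB j y : Em j <= y <= Ep j -> `|y| < 1 + S1 + S2.
  move=> /andP[h1 h2].
  have hE : `|Em j| + `|Ep j| <= S2 by apply: (sum_ge_term (fun j => `|Em j| + `|Ep j|)).
  have : `|y| <= `|Em j| + `|Ep j|.
    case: (lerP 0 y) => y0.
      rewrite ger0_norm //; have := ler_norm (Ep j); have := normr_ge0 (Em j); lra.
    rewrite ltr0_norm //; have := ler_normr (Em j); have := normr_ge0 (Ep j).
    have := ler_norm (- Em j); rewrite normrN; lra.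
  move=> h; lra.
set A := [set x | 1 + S1 + S2 < `|x|].
have mA : measurable A.
  have := @normr_measurable R setT measurableT _ (measurable_itv `]1 + S1 + S2, +oo[%R).
  rewrite setTI; congr measurable; apply/seteqP; split => y /=;
  by rewrite in_itv /= andbT.
rewrite (dec A mA).
rewrite integral0_eq; last first.
  move=> y Ay; rewrite rho0 //= => j hj; have := EB j y hj.
  by rewrite ltNge (ltW Ay).
rewrite big_pred0 ?add0e //.
move=> i; apply/negP; rewrite in_setE /A /=; apply/negP; rewrite -leNgt; exact: ltW.
Qed.
Local Open Scope complex_scope.

Lemma cont_k {R : realType} (a b : R) : b != 0 ->
  continuous (fun x : R => ((x - a) * (x - a) + b * b)^-1).
Proof.
move=> b0 x.
have sx : (x - a) * (x - a) + b * b != 0.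
  apply/negP => /eqP h.
  have h1 : 0 <= (x - a) * (x - a) by rewrite -expr2 sqr_ge0.
  have h2 : 0 < b * b by rewrite -expr2 exprn_even_gt0 // .
  lra.
apply: (@continuousV _ _ (fun x : R => (x - a) * (x - a) + b * b)) => //.
apply: continuousD; last exact: cst_continuous.
apply: (@continuousM _ _ (fun x : R => x - a) (fun x : R => x - a)).
  by apply: continuousB; [exact: cvg_id | exact: cst_continuous].
by apply: continuousB; [exact: cvg_id | exact: cst_continuous].
Qed.

Lemma meas_g (R : realType) (w : R[i]) : 0 < complex.Im w ->
  measurable_fun setT (fun x : R => complex.Re ((x%:C - w)^-1)) /\
  measurable_fun setT (fun x : R => complex.Im ((x%:C - w)^-1)).
Proof.
case: w => a b /= b0.
have b0' : b != 0 by rewrite gt_eqF.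
have mk := continuous_measurable_fun (cont_k a b b0').
split.
- rewrite (_ : (fun x : R => _) = (fun x => (x - a) * ((x - a) * (x - a) + b * b)^-1)).
    apply: measurable_funM => //; apply: measurable_funB => //.
  apply: funext => x /=; rewrite !expr2; congr (_ * (_ + _)^-1); ring.
- rewrite (_ : (fun x : R => _) = (fun x => b * ((x - a) * (x - a) + b * b)^-1)).
    by apply: measurable_funM => //.
  apply: funext => x /=; rewrite !expr2 -mulNr; congr (_ * (_ + _)^-1); ring.
Qed.
Local Open Scope complex_scope.

Lemma int_bnd {R : realType} (mu : probability R R) (D : set R) (f : R -> R) (M : R) :
  measurable D -> measurable_fun D f -> (forall x, `|f x| <= M) ->
  mu.-integrable D (EFin \o f).
Proof.
move=> mD mf fM; apply/integrableP; split; first exact/measurable_EFinP.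
apply: (@le_lt_trans _ _ ((`|M|)%:E * mu D)%E).
  apply: integral_le_bound => //; first exact/measurable_EFinP.
  apply: aeW => x _ /=; rewrite lee_fin; exact: (le_trans (fM x) (ler_norm M)).
apply: lte_mul_pinfty => //.
exact: (le_lt_trans (probability_le1 mu mD) (ltey _)).
Qed.

Definition CI {R : realType} (mu : probability R R) (h : R -> R[i]) : R[i] :=
  (\int[mu]_x complex.Re (h x)) +i* (\int[mu]_x complex.Im (h x)).

Definition goodf {R : realType} (h : R -> R[i]) :=
  [/\ measurable_fun setT (fun x => complex.Re (h x)),
      measurable_fun setT (fun x => complex.Im (h x)) &
      exists M, forall x, `|complex.Re (h x)| <= M /\ `|complex.Im (h x)| <= M].

Lemma good_intRe {R : realType} (mu : probability R R) {h} : goodf h ->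
  mu.-integrable setT (EFin \o (fun x => complex.Re (h x))).
Proof. by case=> m1 _ [M hM]; apply: (@int_bnd _ mu setT _ M) => // x; case: (hM x). Qed.

Lemma good_intIm {R : realType} (mu : probability R R) {h} : goodf h ->
  mu.-integrable setT (EFin \o (fun x => complex.Im (h x))).
Proof. by case=> _ m1 [M hM]; apply: (@int_bnd _ mu setT _ M) => // x; case: (hM x). Qed.

Lemma CI_scale {R : realType} (mu : probability R R) (c : R[i]) {h} : goodf h ->
  goodf (fun x => c * h x) /\ CI mu (fun x => c * h x) = c * CI mu h.
Proof.
move=> gh; have i1 := good_intRe mu gh; have i2 := good_intIm mu gh.
case: gh => m1 m2 [M hM].
case: c => c1 c2.
have eRe x : complex.Re ((c1 +i* c2) * h x) = c1 * complex.Re (h x) - c2 * complex.Im (h x).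
  by case: (h x).
have eIm x : complex.Im ((c1 +i* c2) * h x) = c1 * complex.Im (h x) + c2 * complex.Re (h x).
  by case: (h x).
split.
  split.
  - rewrite (funext eRe); apply: measurable_funB; apply: measurable_funM => //.
  - rewrite (funext eIm); apply: measurable_funD; apply: measurable_funM => //.
  - exists ((`|c1| + `|c2|) * M) => x; rewrite eRe eIm; case: (hM x) => h1 h2.
    have hM0 : 0 <= M by apply: le_trans h1.
    split.
    + apply: (le_trans (ler_normB _ _)); rewrite !normrM mulrDl.
      by apply: lerD; apply: ler_wpM2l.
    + apply: (le_trans (ler_normD _ _)); rewrite !normrM mulrDl.
      by apply: lerD; apply: ler_wpM2l.
have iZ (k : R) (f : R -> R) : measurable_fun setT f -> (forall x, `|f x| <= M) ->
    mu.-integrable setT (EFin \o (fun x => k * f x)).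
  move=> mf hf; apply: (@int_bnd _ mu setT _ (`|k| * M)) => //.
    by apply: measurable_funM.
  by move=> x; rewrite normrM; apply: ler_wpM2l.
have hM1 x : `|complex.Re (h x)| <= M by case: (hM x).
have hM2 x : `|complex.Im (h x)| <= M by case: (hM x).
rewrite /CI (funext eRe) (funext eIm).
rewrite RintegralB ?iZ // RintegralD ?iZ // !RintegralZl //.
Qed.

Lemma Rint_cst1 {R : realType} (mu : probability R R) : \int[mu]_(x in setT) (1 : R) = 1.
Proof. rewrite Rintegral_cst // mul1r; exact: (congr1 fine (probability_setT mu)). Qed.

Lemma CI_add1 {R : realType} (mu : probability R R) {h} : goodf h ->
  goodf (fun x => 1 + h x) /\ CI mu (fun x => 1 + h x) = 1 + CI mu h.
Proof.
move=> gh; have i1 := good_intRe mu gh; have i2 := good_intIm mu gh.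
case: gh => m1 m2 [M hM].
have eRe x : complex.Re (1 + h x) = 1 + complex.Re (h x) by case: (h x).
have eIm x : complex.Im (1 + h x) = complex.Im (h x) by case: (h x) => a b /=; rewrite add0r.
split.
  split.
  - rewrite (funext eRe); apply: measurable_funD => //.
  - by rewrite (funext eIm).
  - exists (1 + M) => x; rewrite eRe eIm; case: (hM x) => h1 h2.
    split; last by apply: (le_trans h2); rewrite lerDr.
    by apply: (le_trans (ler_normD _ _)); rewrite normr1 lerD2l.
rewrite /CI (funext eRe) (funext eIm).
rewrite RintegralD //; last by apply: (@int_bnd _ mu setT _ 1) => // x; rewrite normr1.
rewrite Rint_cst1.
by apply/eqP; rewrite eq_complex /= !eqxx add0r eqxx.
Qed.

Lemma measN {R : realType} (B : R) : measurable [set x : R | B < `|x|].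
Proof.
have := @normr_measurable R setT measurableT _ (measurable_itv `]B, +oo[%R).
rewrite setTI; congr measurable; apply/seteqP; split => y /=;
by rewrite in_itv /= andbT.
Qed.

Lemma setS_eq {R : realType} (B : R) :
  [set x : R | `|x| <= B] = ~` [set x : R | B < `|x|].
Proof. by apply/seteqP; split => x /=; rewrite leNgt => /negP. Qed.

Lemma measS {R : realType} (B : R) : measurable [set x : R | `|x| <= B].
Proof. by rewrite setS_eq; apply: measurableC; apply: measN. Qed.

Lemma muS1 {R : realType} (mu : probability R R) (B : R) :
  mu [set x | B < `|x|] = 0%E -> mu [set x : R | `|x| <= B] = 1%E.
Proof. by move=> h0; rewrite setS_eq probability_setC ?h0 ?sube0 //; apply: measN. Qed.

Lemma Rint_supp {R : realType} (mu : probability R R) {B : R} {f : R -> R} {M : R} :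
  mu [set x | B < `|x|] = 0%E -> measurable_fun setT f -> (forall x, `|f x| <= M) ->
  \int[mu]_x f x = \int[mu]_(x in [set x : R | `|x| <= B]) f x.
Proof.
move=> h0 mf hf; rewrite /Rintegral; congr fine.
rewrite (negligible_integral (measN B)) //; last exact: (@int_bnd _ mu setT _ M).
by rewrite setTD -setS_eq.
Qed.

Lemma Rint_bnd {R : realType} (mu : probability R R) (B : R) (f : R -> R) (M m : R) :
  mu [set x | B < `|x|] = 0%E -> measurable_fun setT f -> (forall x, `|f x| <= M) ->
  (forall x, `|x| <= B -> `|f x| <= m) -> `|\int[mu]_x f x| <= m.
Proof.
move=> h0 mf hf hm; rewrite (Rint_supp mu h0 mf hf).
have mfS : measurable_fun [set x : R | `|x| <= B] f by apply: measurable_funS mf.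
apply: (le_trans (le_normr_Rintegral _ _)); first exact: measS.
  by apply: (@int_bnd _ mu _ _ M) => //; apply: measS.
apply: (@le_trans _ _ (\int[mu]_(x in [set x : R | `|x| <= B]) m)).
  apply: le_Rintegral; first exact: measS.
  - apply: (@int_bnd _ mu _ _ M); first exact: measS.
      by apply: measurableT_comp => //.
    by move=> x; rewrite normr_id.
  - by apply: (@int_bnd _ mu _ _ `|m|) => //; apply: measS.
  - by move=> x; apply: hm.
rewrite Rintegral_cst; last exact: measS. by rewrite (congr1 fine (@muS1 _ mu B h0)) mulr1.
Qed.

Lemma Rint_low {R : realType} (mu : probability R R) (B : R) (f : R -> R) (M L : R) :
  mu [set x | B < `|x|] = 0%E -> measurable_fun setT f -> (forall x, `|f x| <= M) ->
  (forall x, `|x| <= B -> L <= f x) -> L <= \int[mu]_x f x.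
Proof.
move=> h0 mf hf hm; rewrite (Rint_supp mu h0 mf hf).
have mfS : measurable_fun [set x : R | `|x| <= B] f by apply: measurable_funS mf.
apply: (@le_trans _ _ (\int[mu]_(x in [set x : R | `|x| <= B]) L)).
  rewrite Rintegral_cst; last exact: measS. by rewrite (congr1 fine (@muS1 _ mu B h0)) mulr1.
apply: le_Rintegral; first exact: measS.
- by apply: (@int_bnd _ mu _ _ `|L|) => //; apply: measS.
- by apply: (@int_bnd _ mu _ _ M) => //; apply: measS.
- by move=> x; apply: hm.
Qed.
Local Open Scope complex_scope.

Lemma Cmul {R : realType} (a b : R) : a%:C * b%:C = (a * b)%:C.
Proof. by apply/eqP; rewrite eq_complex /= !mulr0 !mul0r subr0 addr0 !eqxx. Qed.
Lemma Cadd {R : realType} (a b : R) : a%:C + b%:C = (a + b)%:C.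
Proof. by apply/eqP; rewrite eq_complex /= addr0 !eqxx. Qed.
Lemma Csub {R : realType} (a b : R) : a%:C - b%:C = (a - b)%:C.
Proof. by apply/eqP; rewrite eq_complex /= oppr0 addr0 !eqxx. Qed.
Lemma Cinv {R : realType} (a : R) : (a%:C)^-1 = (a^-1)%:C.
Proof.
apply/eqP; rewrite eq_complex /= expr0n addr0 mul0r oppr0 eqxx andbT.
by rewrite expr2 invfM mulrA; have [->|a0] := eqVneq a 0; rewrite ?invr0 ?mulr0 ?mulfV ?mul1r.
Qed.

Definition nr {R : realType} (z : R[i]) : R :=
  Num.sqrt (complex.Re z ^+ 2 + complex.Im z ^+ 2).

Lemma normE {R : realType} (z : R[i]) : `|z| = (nr z)%:C.
Proof. exact: normc_def. Qed.

Lemma nr_ge0 {R : realType} (z : R[i]) : 0 <= nr z.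
Proof. exact: sqrtr_ge0. Qed.

Lemma nr_Re {R : realType} (z : R[i]) : `|complex.Re z| <= nr z.
Proof.
rewrite /nr -sqrtr_sqr ler_wsqrtr // lerDl; exact: sqr_ge0.
Qed.

Lemma nr_Im {R : realType} (z : R[i]) : `|complex.Im z| <= nr z.
Proof.
rewrite /nr -sqrtr_sqr ler_wsqrtr // lerDr; exact: sqr_ge0.
Qed.

Lemma nr_M {R : realType} (x y : R[i]) : nr (x * y) = nr x * nr y.
Proof. by have := normrM x y; rewrite !normE Cmul => /complexI. Qed.

Lemma nr_V {R : realType} (x : R[i]) : nr (x^-1) = (nr x)^-1.
Proof.
have := normfV x; rewrite !normE.
by rewrite Cinv => /complexI.
Qed.

Lemma nr_C {R : realType} (x : R) : nr (x%:C) = `|x|.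
Proof. by rewrite /nr /= expr0n addr0 sqrtr_sqr. Qed.

Lemma nr_B {R : realType} (x y : R[i]) : nr x - nr y <= nr (x - y).
Proof. by have := lerB_dist x y; rewrite !normE Csub lecR. Qed.

Lemma nr_D {R : realType} (x y : R[i]) : nr (x + y) <= nr x + nr y.
Proof. by have := ler_normD x y; rewrite !normE Cadd lecR. Qed.

Lemma nr_le {R : realType} (a b : R) : nr (a +i* b) <= `|a| + `|b|.
Proof.
have h0 : 0 <= `|a| + `|b| by rewrite addr_ge0.
rewrite /nr /= -{1}(ger0_norm h0) -(sqrtr_sqr (`|a| + `|b|)) ler_wsqrtr // sqrrD !real_normK ?num_real //.
rewrite -addrA lerD2l lerDr; apply: mulrn_wge0; exact: mulr_ge0.
Qed.

Lemma nr_eq0 {R : realType} (x : R[i]) : (nr x == 0) = (x == 0).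
Proof. by rewrite -[x == 0]normr_eq0 normE -[0 : R[i]]/(0%:C) (inj_eq (@complexI R)). Qed.

Lemma nr_sym {R : realType} (x y : R[i]) : nr (x - y) = nr (y - x).
Proof. by have := distrC x y; rewrite !normE => /(@complexI R). Qed.

Lemma nr_N {R : realType} (x : R[i]) : nr (- x) = nr x.
Proof. by have := normrN x; rewrite !normE => /(@complexI R). Qed.

Lemma CI_bnd {R : realType} (mu : probability R R) (B m : R) h :
  mu [set x | B < `|x|] = 0%E -> goodf h ->
  (forall x, `|x| <= B -> `|complex.Re (h x)| <= m /\ `|complex.Im (h x)| <= m) ->
  `|complex.Re (CI mu h)| <= m /\ `|complex.Im (CI mu h)| <= m.
Proof.
move=> h0 [m1 m2 [M hM]] hm; split => /=.
- apply: (@Rint_bnd _ mu B _ M m h0 m1); first by move=> x; case: (hM x).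
  by move=> x /hm [].
- apply: (@Rint_bnd _ mu B _ M m h0 m2); first by move=> x; case: (hM x).
  by move=> x /hm [].
Qed.

Lemma CI_low {R : realType} (mu : probability R R) (B L : R) h :
  mu [set x | B < `|x|] = 0%E -> goodf h ->
  (forall x, `|x| <= B -> L <= complex.Re (h x)) ->
  L <= complex.Re (CI mu h).
Proof.
move=> h0 [m1 m2 [M hM]] hm /=.
apply: (@Rint_low _ mu B _ M L h0 m1); first by move=> x; case: (hM x).
exact: hm.
Qed.

Lemma ReN {R : realType} (z : R[i]) : complex.Re (- z) = - complex.Re z.
Proof. by case: z. Qed.
Lemma Re1D {R : realType} (z : R[i]) : complex.Re (1 + z) = 1 + complex.Re z.
Proof. by case: z. Qed.
Lemma ImCB {R : realType} (x : R) (v : R[i]) : complex.Im (x%:C - v) = - complex.Im v.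
Proof. by case: v => a b /=; rewrite add0r. Qed.

Lemma F_est {R : realType} (mu : probability R R) (B : R) : 0 < B ->
  mu [set x | B < `|x|] = 0%E ->
  forall w : R[i], 0 < complex.Im w -> 4 * B <= nr w ->
  nr (F_mu mu w - w) <= 4 * B.
Proof.
move=> B0 h0 w hw sB.

have s0 : 0 < nr w by lra.
set g := fun x : R => (x%:C - w)^-1.
have dI x : complex.Im w <= nr (x%:C - w).
  by have := nr_Im (x%:C - w); rewrite ImCB normrN gtr0_norm.
have dpos x : 0 < nr (x%:C - w) by apply: (lt_le_trans hw).
have ggood : goodf g.
  have [mg1 mg2] := @meas_g R w hw.
  split => //; exists ((complex.Im w)^-1) => x; split.
  - apply: (le_trans (nr_Re _)); rewrite /g nr_V lef_pV2 ?posrE //.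
  - apply: (le_trans (nr_Im _)); rewrite /g nr_V lef_pV2 ?posrE //.
have [gw CIw] := CI_scale mu w ggood.
have [gmw CImw] := CI_scale mu (- w) ggood.
have [g1 CI1] := CI_add1 mu gw.
set m := CI mu g.
have Fm : F_mu mu w = - m^-1 by [].
set k := 4 * B / (3 * nr w).
have k3 : k * (3 * nr w) = 4 * B.
  by rewrite /k mulrAC -mulrA mulfV ?mulr1 // mulf_neq0 // ?gt_eqF.
have k0 : 0 <= k by rewrite /k divr_ge0 // ?mulr_ge0 //; lra.
have k13 : 3 * k <= 1 by nra.
have e x : 1 + w * g x = x%:C * g x.
  have nz : x%:C - w != 0 by rewrite -nr_eq0 gt_eqF.
  rewrite /g; apply: (mulIf nz); rewrite mulrDl mul1r -!mulrA mulVf // !mulr1.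
  by rewrite subrK.
have eb x : `|x| <= B -> nr (1 + w * g x) <= k.
  move=> xB; rewrite e nr_M nr_C /g nr_V ler_pdivrMr //.
  have := nr_B w (x%:C); rewrite nr_C nr_sym => hd.
  have hd' : 3 * nr w <= 4 * nr (x%:C - w) by lra.
  have := ler_wpM2l k0 hd'; nra.
have hP := @CI_bnd _ mu B k _ h0 g1 (fun x hx => conj (le_trans (nr_Re _) (eb x hx)) (le_trans (nr_Im _) (eb x hx))).
have hQ : 1 - k <= complex.Re (CI mu (fun x => - w * g x)).
  apply: (@CI_low _ mu B (1 - k) _ h0 gmw) => x hx.
  rewrite mulNr ReN.
  have : complex.Re (1 + w * g x) <= k by apply: (le_trans (ler_norm _)); apply: (le_trans (nr_Re _)); exact: eb.
  rewrite Re1D; lra.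
rewrite CImw in hQ.
have hQ2 : 1 - k <= nr w * nr m.
  apply: (le_trans hQ); apply: (le_trans (ler_norm _)); apply: (le_trans (nr_Re _)).
  by rewrite nr_M nr_N.
have m0 : 0 < nr m.
  rewrite lt_def nr_ge0 andbT; apply/negP => /eqP hm; rewrite hm mulr0 in hQ2; lra.
have mn0 : m != 0 by rewrite -nr_eq0 gt_eqF.
have id : F_mu mu w - w = - (1 + w * m) / m.
  by rewrite Fm; field.
rewrite id nr_M nr_N nr_V ler_pdivrMr // -CIw -CI1.
have hP2 : nr (CI mu (fun x => 1 + w * g x)) <= 2 * k.
  rewrite /CI; apply: (le_trans (nr_le _ _)); case: hP => ?; lra.
apply: (le_trans hP2).
have : k * (1 - k) <= k * (nr w * nr m) by apply: ler_wpM2l.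
have -> : 4 * B * nr m = 3 * (k * (nr w * nr m)) by rewrite -k3; ring.
nra.
Qed.

Lemma Ct1 {R : realType} (t : R) : (t - 1)%:C = t%:C - 1 :> R[i].
Proof. by apply/eqP; rewrite eq_complex /= oppr0 addr0 !eqxx. Qed.

Lemma omega_bnd {R : realType} (mu : probability R R) (t : R) omega (B : R) :
  0 < B -> mu [set x | B < `|x|] = 0%E -> 1 < t ->
  is_subordination mu t omega ->
  forall z : Cplx R, 0 < complex.Im z -> nr (omega z) <= nr z + 4 * B * t.
Proof.
move=> B0 h0 t1 [_ him _ heq] z hz.
have hw : 0 < complex.Im (omega z) by apply: (lt_le_trans hz); apply: him.
have [small|big] := ltP (nr (omega z)) (4 * B).
  have := nr_ge0 z; nra.
have hF := F_est mu B B0 h0 (omega z) hw big.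
have ew : omega z - z = (t - 1)%:C * (F_mu mu (omega z) - omega z).
  rewrite mulrBr -heq // Ct1; ring.
have : nr (omega z - z) <= (t - 1) * (4 * B).
  rewrite ew nr_M nr_C ger0_norm; last lra.
  apply: ler_wpM2l => //; lra.
have := nr_D (omega z - z) z; rewrite subrK; nra.
Qed.

Lemma ImD {R : realType} (x y : R[i]) :
  complex.Im (x + y) = complex.Im x + complex.Im y.
Proof. by case: x; case: y. Qed.

Lemma ext_bnd {R : realType} (mu : probability R R) (t : R) omega omega_ext (B : R) :
  0 < B -> mu [set x | B < `|x|] = 0%E -> 1 < t ->
  is_subordination mu t omega -> is_continuous_extension omega omega_ext ->
  forall z0 : Cplx R, closed_uhp z0 ->
  exists2 w, omega_ext z0 = Some w & nr w <= nr z0 + 4 * B * t + 2.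
Proof.
move=> B0 h0 t1 sub [e1 _ e3] z0 hz0.
have hb := @omega_bnd _ mu t omega B B0 h0 t1 sub.
have key d : 0 < d -> exists z : Cplx R,
    [/\ closed_uhp z, `|z - z0| < d%:C, 0 < complex.Im z & nr z <= nr z0 + 1].
  move=> d0; set de := Num.min d 1 / 2.
  have de0 : 0 < de by rewrite /de divr_gt0 // lt_min d0 ltr01.
  have ded : de < d.
    have : Num.min d 1 <= d by rewrite ge_min lexx.
    rewrite /de; lra.
  have de1 : de <= 1.
    have : Num.min d 1 <= 1 by rewrite ge_min lexx orbT.
    rewrite /de; lra.
  have hz0' : 0 <= complex.Im z0 by [].
  exists (z0 + (0 +i* de)); split.
  - rewrite /closed_uhp /= ImD /=; lra.
  - rewrite (addrC z0) addrK normE ltcR; apply: (le_lt_trans (nr_le _ _)).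
    by rewrite normr0 add0r gtr0_norm.
  - rewrite ImD /=; lra.
  - apply: (le_trans (nr_D _ _)); rewrite lerD2l.
    apply: (le_trans (nr_le _ _)); rewrite normr0 add0r gtr0_norm //.
have := e3 z0 hz0; rewrite /sphere_cont_at.
case E: (omega_ext z0) => [w|] hc.
- exists w => //.
  have [d d0 hd] := hc 1 ltr01.
  have [z [cz zd hz nz]] := key d d0.
  have [w' ew' lt1] := hd z cz zd.
  rewrite e1 // in ew'; case: ew' => ew'; subst w'.
  have := hb z hz; rewrite normE ltcR in lt1.
  have := nr_B w (omega z); rewrite nr_sym; lra.
- exfalso.
  have [d d0 hd] := hc (nr z0 + 4 * B * t + 2).
  have [z [cz zd hz nz]] := key d d0.
  have := hd z cz zd (omega z) (e1 z hz); rewrite normE ltcR.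
  have := hb z hz; lra.
Qed.

Lemma compact_nr {R : realType} (K : set (Cplx R)) :
  compact K -> exists r : R, forall z, K z -> nr z <= r.
Proof.
rewrite compact_cover => Aco.
have covA : K `<=` \bigcup_(n : nat) [set p : Cplx R | nr p < n%:R].
  by move=> p _; exists (Num.truncn (nr p)).+1 => //=; exact: Num.Theory.truncnS_gt.
have /Aco [] := covA.
  move=> n _; rewrite openE => p /= ltpn.
  apply/nbhs_ballP; exists ((n%:R - nr p)%:C); first by rewrite /= ltcR subr_gt0.
  move=> q; rewrite -ball_normE /= normE ltcR => hq.
  have := nr_B q p; rewrite nr_sym; lra.
move=> D _ DcovA.
exists (\max_(i <- finmap.enum_fset D) i)%:R => p /DcovA [n Dn pn].
apply: (le_trans (ltW pn)); rewrite ler_nat.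
by apply: (@leq_bigmax_seq _ _ xpredT (fun i => i)) => //=.
Qed.

Theorem lemma3p3 (R : realType) (mu : probability R R) (nac npp nppout : nat)
  (t : R) (omega : Cplx R -> Cplx R) (omega_ext : Cplx R -> option (Cplx R))
  (K : set (Cplx R)) :
  assumptionA mu nac npp nppout ->
  1 < t ->
  is_subordination mu t omega ->
  is_continuous_extension omega omega_ext ->
  compact K -> K `<=` @closed_uhp R ->
  exists2 C : R, 0 < C &
    forall z, K z -> exists2 w, omega_ext z = Some w & `|w| <= C%:C.
Proof.
move=> hA t1 sub ext cK sK.
have [B B0 h0] := supp_bound _ _ _ _ _ hA.
have [r hr] := compact_nr _ cK.
exists (`|r| + 4 * B * t + 2).
  have := normr_ge0 r; have : 0 < B * t by apply: mulr_gt0 => //; lra.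
  lra.
move=> z Kz.
have [w ew hw] := @ext_bnd _ mu t omega omega_ext B B0 h0 t1 sub ext z (sK z Kz).
exists w => //; rewrite normE lecR.
have := hr z Kz; have := ler_norm r; lra.
Qed.
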